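(* Let $G$ be an ordered graph, let $xy\in E(G)$, and let $(i,x)\in\mathbb N\times V(G)$. If $\mathrm{ht}_G(xy)\succ_{\mathrm{lex}}(i,x)$, then there is an edge $xz\in E(G)$ with $\mathrm{ht}_G(xz)=(i,x)$.
   Context: An ordered graph is a finite simple graph $G$ equipped with a total order $\le_G$ on $E(G)$ and a total order $\le^V_G$ on $V(G)$. Let $\mathbb N=\{1,2,\dots\}$. Define $\preceq_{\mathrm{lex}}$ on $\mathbb N\times V(G)$ by $(i,v)\preceq_{\mathrm{lex}}(i',v')$ iff $i<i'$, or $i=i'$ and $v\le^V_G v'$. The height table $\mathrm{HT}(G)$ is a partially filled array indexed by $\mathbb N\times V(G)$, built by going through all $(i,v)$ in $\preceq_{\mathrm{lex}}$-increasing order and setting the entry at $(i,v)$ to be the $\le_G$-largest edge containing $v$ not yet entered into the table (blank if none remain). Every edge is entered exactly once; $\mathrm{ht}_G(e)$ denotes the position of $e$ in $\mathrm{HT}(G)$, written as (row, column). *)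

(* Defs.v *)
From mathcomp Require Import all_boot.
Set Implicit Arguments. Unset Strict Implicit. Unset Printing Implicit Defensive.

(* An ordered graph: a finite simple graph on a finType V, given by a
   symmetric irreflexive adjacency relation [adj], together with a total
   order [vle] on V(G) and a total order [ele] on E(G). *)

Section OrderedGraph.
Variable V : finType.

Definition edges (adj : rel V) : {set {set V}} :=
  [set [set x; y] | x in V, y in [pred y | adj x y]].

Definition simple_graph (adj : rel V) : Prop :=
  symmetric adj /\ irreflexive adj.

Definition total_order_on (T : Type) (A : T -> Prop) (r : rel T) : Prop :=
  [/\ forall x, A x -> r x x,
      forall x y, A x -> A y -> r x y -> r y x -> x = y,
      forall x y z, A x -> A y -> A z -> r x y -> r y z -> r x z
    & forall x y, A x -> A y -> r x y || r y x].

Variables (vle : rel V) (ele : rel {set V}).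

Definition maxedge (R : {set {set V}}) (v : V) : option {set V} :=
  [pick e in R | (v \in e) && [forall f in R, (v \in f) ==> ele f e]].

(* entering (_, v) into the table with remaining edges R *)
Definition step (R : {set {set V}}) (v : V) : {set {set V}} :=
  if maxedge R v is Some e then R :\ e else R.

Definition vseq : seq V := sort vle (enum V).

(* remaining edges at the start of row i (rows indexed 1, 2, ...) *)
Definition rem_row (E : {set {set V}}) (i : nat) : {set {set V}} :=
  iter i.-1 (fun R => foldl step R vseq) E.

(* entry of HT(G) at position (i, v), i >= 1; None = blank *)
Definition entry (E : {set {set V}}) (i : nat) (v : V) : option {set V} :=
  maxedge (foldl step (rem_row E i) (take (index v vseq) vseq)) v.

Definition lexlt (p q : nat * V) : Prop :=
  p.1 < q.1 \/ (p.1 = q.1 /\ vle p.2 q.2 /\ p.2 <> q.2).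

End OrderedGraph.

(* Main.v *)
Require Import Defs.
From mathcomp Require Import all_boot.
Set Implicit Arguments. Unset Strict Implicit.

Section Aux.
Variables (V : finType) (vle : rel V) (ele : rel {set V}).

Lemma step_sub R v : step ele R v \subset R.
Proof. rewrite /step; case: maxedge => // e; exact: subsetDl. Qed.

Lemma foldl_sub R s : foldl (step ele) R s \subset R.
Proof.
elim: s R => //= v s IH R; exact: subset_trans (IH _) (step_sub _ _).
Qed.

Lemma iter_sub n R : iter n (fun R => foldl (step ele) R (vseq vle)) R \subset R.
Proof. elim: n => //= n IH; exact: subset_trans (foldl_sub _ _) IH. Qed.

Lemma maxedge_in R v e : maxedge ele R v = Some e -> e \in R /\ v \in e.
Proof.
rewrite /maxedge; case: pickP => // f /andP[fR /andP[vf _]] [<-]; by [].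
Qed.

Definition pos E i k := foldl (step ele) (rem_row vle ele E i) (take k (vseq vle)).

Lemma pos_sub E i k : pos E i k \subset E.
Proof. exact: subset_trans (foldl_sub _ _) (iter_sub _ _). Qed.

Lemma pos_mono E i j k k' : 0 < i -> (i < j \/ (i = j /\ k <= k')) ->
  pos E j k' \subset pos E i k.
Proof.
move=> i0 [ij|[<- kk]].
- apply: subset_trans (foldl_sub _ _) _.
  rewrite /rem_row.
  have -> : j.-1 = (j.-1 - i) + i by rewrite subnK //; case: j ij => //.
  rewrite iterD; apply: subset_trans (iter_sub _ _) _.
  case: i i0 ij => // i _ _; rewrite /pos /rem_row /=.
  have HH R : foldl (step ele) R (vseq vle) =
    foldl (step ele) (foldl (step ele) R (take k (vseq vle))) (drop k (vseq vle)).
    by rewrite -foldl_cat cat_take_drop.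
  rewrite HH.
  exact: foldl_sub.
- rewrite /pos -(take_takel (vseq vle) kk).
  rewrite -{1}(cat_take_drop k (take k' (vseq vle))) foldl_cat.
  exact: foldl_sub.
Qed.

Lemma maxedge_some (adj : rel V) (R : {set {set V}}) v e :
  total_order_on (fun e => e \in edges adj) ele ->
  R \subset edges adj -> e \in R -> v \in e ->
  exists e', maxedge ele R v = Some e'.
Proof.
move=> [refl _ trans tot] RE eR ve.
rewrite /maxedge; case: pickP => [f _|H]; first by eauto.
exfalso.
pose C := [set f in R | v \in f].
pose cnt f := #|[set g in C | ele g f]|.
have eC : e \in C by rewrite inE eR ve.
case: (arg_maxnP cnt eC) => f fC fmax.
have fC2 : f \in C := fC.
move: (H f) => /= Hf; rewrite !inE in fC2; case/andP: fC2 => fR vf.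
move: Hf.
rewrite fR vf /=.
have fE : f \in edges adj by apply: (subsetP RE).
suff -> : [forall f0 in R, (v \in f0) ==> ele f0 f] by [].
apply/forall_inP => g gR; apply/implyP => vg.
have gC : g \in C by rewrite inE gR vg.
have gE : g \in edges adj by apply: (subsetP RE).
case/orP: (tot g f gE fE) => // fg.
apply/negPn/negP => ngf.
have : cnt f < cnt g.
  apply: proper_card; apply/properP; split.
  + apply/subsetP => h; rewrite !inE => /andP[/andP[hR vh] hf].
    rewrite hR vh /=.
    have hE : h \in edges adj by apply: (subsetP RE).
    exact: (trans h f g hE fE gE hf fg).
  + exists g; first by rewrite !inE gR vg (refl g gE).
    by rewrite !inE gR vg /= (negbTE ngf).
by move=> lt; move: (fmax g gC) => /= le; move: (leq_trans lt le); rewrite ltnn.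
Qed.

End Aux.

Theorem mainTheorem12 (V : finType) (adj : rel V)
  (vle : rel V) (ele : rel {set V}) :
  simple_graph adj ->
  total_order_on (fun _ => True) vle ->
  total_order_on (fun e => e \in edges adj) ele ->
  forall (x y : V), adj x y ->
  forall (j : nat) (w : V), 0 < j ->
    entry vle ele (edges adj) j w = Some [set x; y] ->
  forall (i : nat), 0 < i ->
    lexlt vle (i, x) (j, w) ->
    exists z : V, adj x z /\ entry vle ele (edges adj) i x = Some [set x; z].
Proof.
move=> [sym irr] [vrefl vanti vtrans vtot] etot x y axy j w j0 Hent i i0 Hlt.
have [xyR _] := maxedge_in Hent.
have Hmono : pos vle ele (edges adj) j (index w (vseq vle)) \subset
             pos vle ele (edges adj) i (index x (vseq vle)).
  apply: pos_mono => //.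
  case: Hlt => /= [ij|[ij [xw nxw]]]; [left => // | right; split => //].
  rewrite leqNgt; apply/negP => wx.
  have vtr : transitive vle by move=> b a c; apply: vtrans.
  have vto : total vle by move=> a b; apply: vtot.
  have srt : sorted vle (vseq vle) by apply: sort_sorted.
  have inV z : z \in vseq vle by rewrite mem_sort mem_enum.
  have := sorted_ltn_nth vtr x srt; move=> /(_ (index w (vseq vle)) (index x (vseq vle))).
  rewrite !inE !index_mem !inV !nth_index // => /(_ isT isT wx) wlx.
  by apply: nxw; apply: vanti.
have xyR' := subsetP Hmono _ xyR.
have [e' He'] := maxedge_some etot (pos_sub _ _ _ _ _) xyR' (setU11 x [set y]).
have [e'R xe'] := maxedge_in He'.
have : e' \in edges adj := subsetP (pos_sub vle ele (edges adj) i (index x (vseq vle))) _ e'R.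
have -> : entry vle ele (edges adj) i x = Some e' := He'.
case/imset2P => a b _; rewrite inE => ab Ee'.
move: xe'; rewrite Ee' !inE => /orP[/eqP xa|/eqP xb].
- by exists b; rewrite xa.
- exists a; rewrite xb setUC; split => //; by rewrite sym.
Qed.
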